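(* Let $z_1,\dots,z_5$ be nonzero complex numbers with $|z_1|\ge|z_2|\ge\cdots\ge|z_5|$ and $z_i^{-1}=z_{6-i}$ for $1\le i\le 5$. Then $$\sum_{i=1}^5|z_i|\le 2\Big|\sum_{i=1}^5 z_i^2\Big|^{1/2}+2\Big|\sum_{i=1}^5 z_i\Big|+15.$$ *)

(* Defs.v *)
From HB Require Import structures.
From mathcomp Require Import all_boot all_order all_algebra.
From mathcomp Require Import complex.
From mathcomp Require Import reals.

(* Main.v *)
Require Import Defs.
From HB Require Import structures.
From mathcomp Require Import all_boot all_order all_algebra.
From mathcomp Require Import complex.
From mathcomp Require Import reals.
From mathcomp Require Import lra ring.
Import Order.TTheory GRing.Theory Num.Theory.
Local Open Scope ring_scope.
Local Open Scope complex_scope.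

Lemma normCE (R : realType) (x : R[i]) : `|x| = (Normc.normc x)%:C.
Proof. by []. Qed.

Lemma sum5 (V : nmodType) (f : 'I_5 -> V) : \sum_(i<5) f i = f (inord 0) + f (inord 1) + f (inord 2) + f (inord 3) + f (inord 4).
Proof.
rewrite !big_ord_recr big_ord0 /= add0r.
by congr (_+_+_+_+_); congr f; apply: val_inj => /=; rewrite inordK.
Qed.

Lemma sqrtCE (R : realType) (r : R) : 0 <= r -> sqrtC (r%:C) = (Num.sqrt r)%:C.
Proof.
move=> r0; rewrite -{1}(sqr_sqrtr r0) rmorphXn sqrCK // ler0c sqrtr_ge0 //.
Qed.

Section N.
Variable R : realType.
Local Notation N := (@Normc.normc R).
Lemma N_ge0 (x : R[i]) : 0 <= N x.
Proof. by case: x => a b; rewrite /= sqrtr_ge0. Qed.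
Lemma ND (x y : R[i]) : N (x + y) <= N x + N y.
Proof. exact: le_normcD. Qed.
Lemma NB (x y : R[i]) : N (x - y) <= N x + N y.
Proof. by apply: le_trans (ND _ _) _; rewrite (normcN (y : Rcomplex R)). Qed.
Lemma NX2 (x : R[i]) : N (x ^+ 2) = N x ^+ 2.
Proof. by rewrite !expr2 Normc.normcM. Qed.
End N.
Arguments N_ge0 {R}. Arguments ND {R}. Arguments NB {R}. Arguments NX2 {R}.

Lemma rhsE (R : realType) (T Y : R) : 2 * T%:C + 2 * Y%:C + 15 = (2*T+2*Y+15)%:C :> R[i].
Proof.
rewrite !rmorphD !rmorphM /=; congr (_ * _ + _ * _ + _); apply/eqP; rewrite eq_complex /= eqxx ?andbT //.
all: by rewrite /= addr0.
Qed.

Theorem lemma3p8 (R : realType) (z : 'I_5 -> R[i])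
  (hnz : forall i, z i != 0)
  (hdec : forall i j : 'I_5, (i <= j)%N -> `|z j| <= `|z i|)
  (hinv : forall i : 'I_5, (z i)^-1 = z (rev_ord i)) :
  \sum_(i < 5) `|z i|
    <= 2 * sqrtC `|\sum_(i < 5) z i ^+ 2| + 2 * `|\sum_(i < 5) z i| + 15.
Proof.
have hd i j : (i <= j < 5)%N -> Normc.normc (z (inord j)) <= Normc.normc (z (inord i)) :> R.
  move=> /andP[hij hj]; rewrite -lecR; apply: (hdec (inord i) (inord j)).
  by rewrite !inordK //; apply: leq_ltn_trans hj.
have hc : z (inord 2) ^+ 2 = 1.
  have e : rev_ord (inord 2) = inord 2 :> 'I_5 by apply: val_inj; rewrite /= inordK.
  by have := hinv (inord 2); rewrite e => h; rewrite expr2 -{1}h mulVf.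
rewrite !sum5 !normCE.
set a := z (inord 0); set b := z (inord 1); set c := z (inord 2);
  set d := z (inord 3); set e := z (inord 4).
have hba : Normc.normc b <= Normc.normc a := hd 0 1 isT.
have hcb : Normc.normc c <= Normc.normc b := hd 1 2 isT.
have hdc : Normc.normc d <= Normc.normc c := hd 2 3 isT.
have hed : Normc.normc e <= Normc.normc d := hd 3 4 isT.
have hC : Normc.normc c = 1.
  have := NX2 c; rewrite hc Normc.normc1 => h.
  have := N_ge0 c; nra.
set S1 := a + b + c + d + e.
set S2 := a ^+ 2 + b ^+ 2 + c ^+ 2 + d ^+ 2 + e ^+ 2.
have hs : Normc.normc (a + b) <= Normc.normc S1 + 3.
  have -> : a + b = S1 - (c + d + e) by rewrite /S1; ring.
  apply: le_trans (NB _ _) _; rewrite lerD2l.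
  apply: le_trans (ND _ _) _; have := ND c d; lra.
have hq : Normc.normc (a ^+ 2 + b ^+ 2) <= Normc.normc S2 + 3.
  have -> : a ^+ 2 + b ^+ 2 = S2 - (c ^+ 2 + d ^+ 2 + e ^+ 2) by rewrite /S2; ring.
  apply: le_trans (NB _ _) _; rewrite lerD2l.
  apply: le_trans (ND _ _) _; have := ND (c ^+ 2) (d ^+ 2).
  rewrite !NX2. have := N_ge0 d; have := N_ge0 e; nra.
have hu : Normc.normc (a - b) ^+ 2 <= 2 * Normc.normc (a ^+ 2 + b ^+ 2) + Normc.normc (a + b) ^+ 2.
  rewrite -NX2 -NX2.
  have -> : (a - b) ^+ 2 = (a ^+ 2 + b ^+ 2) *+ 2 - (a + b) ^+ 2 by ring.
  apply: le_trans (NB _ _) _; rewrite lerD2r normcMn; lra.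
have h2a : 2 * Normc.normc a <= Normc.normc (a + b) + Normc.normc (a - b).
  have := ND (a + b) (a - b).
  have -> : a + b + (a - b) = a *+ 2 by ring.
  rewrite normcMn; lra.
have hS2 := N_ge0 S2.
rewrite sqrtCE //.
have ht := sqr_sqrtr hS2; have ht0 := sqrtr_ge0 (Normc.normc S2).
set t := Num.sqrt _ in ht ht0 *.
rewrite rhsE -!rmorphD lecR.

have := N_ge0 (a + b); have := N_ge0 (a - b); have := N_ge0 (a ^+ 2 + b ^+ 2).
have := N_ge0 e.
set u := Normc.normc (a - b); set s := Normc.normc (a + b).
move=> *.
have hw : u <= 2 * t + s + 6.
  have hs0 : 0 <= s by apply: N_ge0.
  have hts := mulr_ge0 ht0 hs0.
  have : u ^+ 2 <= (2 * t + s + 6) ^+ 2.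
    apply: (le_trans hu); rewrite -/s.
    have : 2 * Normc.normc (a ^+ 2 + b ^+ 2) <= 2 * t ^+ 2 + 6 by rewrite ht; lra.
    rewrite !expr2 in ht *; nra.
  rewrite ler_sqr // ?nnegrE //; lra.
have hs' : s <= Normc.normc S1 + 3 := hs.
have h2a' : 2 * Normc.normc a <= s + u := h2a.
clear hs h2a.
lra.
Qed.
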